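(* Let $R$ be a commutative noetherian ring, $\mathfrak{a}$ an ideal contained in the Jacobson radical of $R$, and $M$ a finitely generated $R$-module. Then among the $\mathfrak{a}$-adically complete $R$-submodules of $M$ there is a unique maximal one (with respect to inclusion).
   Context: A module $N$ is $\mathfrak{a}$-adically complete if the natural map $N\to \varprojlim_n N/\mathfrak{a}^nN$ is an isomorphism. The unique maximal $\mathfrak{a}$-adically complete submodule of $M$ is denoted $C_{\mathfrak{a}}(M)$ (the analytic conductor of $M$). *)

(* Defs.v *)
From HB Require Import structures.
From mathcomp Require Import all_boot all_algebra.
Set Implicit Arguments. Unset Strict Implicit. Unset Printing Implicit Defensive.
Import GRing.Theory.
Local Open Scope ring_scope.

Section Defs.
Variable R : comPzRingType.

Definition is_ideal (I : R -> Prop) : Prop :=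
  [/\ I 0, (forall x y, I x -> I y -> I (x + y)) & (forall r x, I x -> I (r * x))].

Definition fg_ideal (I : R -> Prop) : Prop :=
  exists (k : nat) (g : 'I_k -> R),
    forall x, I x <-> exists c : 'I_k -> R, x = \sum_(i < k) c i * g i.

Definition noetherian_ring : Prop :=
  forall I : R -> Prop, is_ideal I -> fg_ideal I.

Definition maximal_ideal (m : R -> Prop) : Prop :=
  [/\ is_ideal m, ~ m 1 &
      forall J : R -> Prop, is_ideal J -> (forall x, m x -> J x) ->
        J 1 \/ (forall x, J x -> m x)].

Definition jacobson (x : R) : Prop :=
  forall m : R -> Prop, maximal_ideal m -> m x.

Variable M : lmodType R.

Definition is_submod (N : M -> Prop) : Prop :=
  [/\ N 0, (forall x y, N x -> N y -> N (x + y)) & (forall r x, N x -> N (r *: x))].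

Definition fg_module : Prop :=
  exists (k : nat) (g : 'I_k -> M),
    forall m : M, exists c : 'I_k -> R, m = \sum_(i < k) c i *: g i.

Definition idmul (a : R -> Prop) (N : M -> Prop) : M -> Prop :=
  fun m => exists (k : nat) (r : 'I_k -> R) (x : 'I_k -> M),
    (forall i, a (r i) /\ N (x i)) /\ m = \sum_(i < k) r i *: x i.

Fixpoint apow (a : R -> Prop) (N : M -> Prop) (n : nat) : M -> Prop :=
  match n with
  | 0 => N
  | n'.+1 => idmul a (apow a N n')
  end.

(* N is a-adically complete: the natural map N -> lim_n N / a^n N is
   injective (intersection of the a^n N is 0) and surjective (every
   compatible family, given by lifts x_n with x_{n+1} - x_n in a^n N,
   comes from some y in N). *)
Definition adically_complete (a : R -> Prop) (N : M -> Prop) : Prop :=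
  (forall x, N x -> (forall n, apow a N n x) -> x = 0) /\
  (forall x : nat -> M, (forall n, N (x n)) ->
     (forall n, apow a N n (x n.+1 - x n)) ->
     exists y, N y /\ forall n, apow a N n (y - x n)).

Definition maximal_complete (a : R -> Prop) (N : M -> Prop) : Prop :=
  [/\ is_submod N, adically_complete a N &
      forall N' : M -> Prop, is_submod N' -> adically_complete a N' ->
        (forall x, N x -> N' x) -> forall x, N' x -> N x].

End Defs.

(* Main.v *)
Require Import Defs.
From HB Require Import structures.
From mathcomp Require Import all_boot all_algebra.
From Stdlib Require Import Classical ClassicalEpsilon.
Set Implicit Arguments. Unset Strict Implicit. Unset Printing Implicit Defensive.
Import GRing.Theory.
Local Open Scope ring_scope.

Section Gen.
Variable R : comPzRingType.
Variable V : lmodType R.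

Fixpoint comb (s : seq V) (x : V) : Prop :=
  match s with
  | [::] => x = 0
  | g :: t => exists c y, comb t y /\ x = c *: g + y
  end.

Lemma comb_submod s : is_submod (comb s).
Proof.
elim: s => [|g t [IH0 IHD IHZ]] /=.
  split; first by [].
  - by move=> x y -> ->; rewrite addr0.
  - by move=> r x ->; rewrite scaler0.
split.
- by exists 0, 0; split => //; rewrite scale0r addr0.
- move=> x y [c1 [y1 [H1 ->]]] [c2 [y2 [H2 ->]]].
  exists (c1 + c2), (y1 + y2); split; first exact: IHD.
  by rewrite scalerDl addrACA.
- move=> r x [c [y [H ->]]]; exists (r * c), (r *: y); split; first exact: IHZ.
  by rewrite scalerDr scalerA.
Qed.

Lemma comb_mem s g : g \in s -> comb s g.
Proof.
elim: s => [|h t IH] //=; rewrite in_cons => /orP [/eqP ->|Hg].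
  by exists 1, 0; split; [|rewrite scale1r addr0]; case: (comb_submod t).
by exists 0, g; split; [exact: IH|rewrite scale0r add0r].
Qed.

Lemma comb_min s (N : V -> Prop) : is_submod N -> (forall g, g \in s -> N g) ->
  forall x, comb s x -> N x.
Proof.
move=> [N0 ND NZ]; elim: s => [|g t IH] Hs x /=; first by move->.
move=> [c [y [Hy ->]]]; apply: ND; first by apply: NZ; apply: Hs; rewrite mem_head.
by apply: IH => // h Hh; apply: Hs; rewrite in_cons Hh orbT.
Qed.

Lemma submod_sum (N : V -> Prop) (I : Type) (r : seq I) (P : pred I) (F : I -> V) :
  is_submod N -> (forall i, P i -> N (F i)) -> N (\sum_(i <- r | P i) F i).
Proof. by move=> [N0 ND NZ] H; apply: big_ind. Qed.

Lemma submod_opp (N : V -> Prop) x : is_submod N -> N x -> N (- x).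
Proof. by move=> [_ _ NZ] Hx; rewrite -scaleN1r; apply: NZ. Qed.

Lemma submod_sub (N : V -> Prop) x y : is_submod N -> N x -> N y -> N (x - y).
Proof. by move=> HN Hx Hy; case: (HN) => _ ND _; apply: ND => //; apply: submod_opp. Qed.

Definition fgsub (N : V -> Prop) :=
  exists s : seq V, (forall g, g \in s -> N g) /\ (forall x, N x -> comb s x).

Definition noeth := forall N : V -> Prop, is_submod N -> fgsub N.

Lemma seq_bound (c : nat -> V -> Prop) (s : seq V) :
  (forall n m x, (n <= m)%N -> c n x -> c m x) ->
  (forall g, g \in s -> exists n, c n g) -> exists n, forall g, g \in s -> c n g.
Proof.
move=> Hmono; elim: s => [|g t IH] H; first by exists 0%N.
have [n Hn] := H g (mem_head _ _).
have [m Hm] : exists n, forall g, g \in t -> c n g.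
  by apply: IH => h Hh; apply: H; rewrite in_cons Hh orbT.
exists (maxn n m) => h; rewrite in_cons => /orP [/eqP ->|Hh].
  by apply: Hmono Hn; rewrite leq_maxl.
by apply: Hmono (Hm _ Hh); rewrite leq_maxr.
Qed.

Lemma noeth_max : noeth -> forall P : (V -> Prop) -> Prop,
  (forall N, P N -> is_submod N) -> forall N0, P N0 ->
  exists N, P N /\ forall N', P N' -> (forall x, N x -> N' x) -> forall x, N' x -> N x.
Proof.
move=> HN P HP N0 HN0.
apply: NNPP => Hno.
have Hstep : forall S : {N | P N}, exists S' : {N | P N},
   (forall x, proj1_sig S x -> proj1_sig S' x) /\ exists x, proj1_sig S' x /\ ~ proj1_sig S x.
  move=> [N HPN] /=; apply: NNPP => H1; apply: Hno; exists N; split => // N' HPN' Hsub x Hx.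
  apply: NNPP => Hnx; apply: H1; by exists (exist _ N' HPN'); split => //; exists x.
pose nxt (S : {N | P N}) := proj1_sig (constructive_indefinite_description _ (Hstep S)).
have Hnxt S : (forall x, proj1_sig S x -> proj1_sig (nxt S) x) /\
     exists x, proj1_sig (nxt S) x /\ ~ proj1_sig S x.
  exact: proj2_sig (constructive_indefinite_description _ (Hstep S)).
pose ch := fix ch (n : nat) : {N | P N} :=
  match n with 0 => exist _ N0 HN0 | n'.+1 => nxt (ch n') end.
pose c n := proj1_sig (ch n).
have Hmono : forall n m x, (n <= m)%N -> c n x -> c m x.
  move=> n m x /subnKC <-; elim: (m - n)%N => [|d IH]; first by rewrite addn0.
  by move=> Hx; rewrite addnS; apply: (proj1 (Hnxt _)); apply: IH.
have Hsub n : is_submod (c n) by apply: HP; exact: proj2_sig.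
pose U x := exists n, c n x.
have HU : is_submod U.
  split.
  - by exists 0%N; case: (Hsub 0%N).
  - move=> x y [n Hn] [m Hm]; exists (maxn n m); case: (Hsub (maxn n m)) => _ D _.
    apply: D; [apply: Hmono Hn; exact: leq_maxl|apply: Hmono Hm; exact: leq_maxr].
  - by move=> r x [n Hn]; exists n; case: (Hsub n) => _ _ Z; apply: Z.
have [s [Hs1 Hs2]] := HN U HU.
have [n Hn] := seq_bound Hmono Hs1.
have [x [Hx1 Hx2]] := proj2 (Hnxt (ch n)).
apply: Hx2; apply: (comb_min (Hsub n) Hn); apply: Hs2; by exists n.+1.
Qed.


Lemma comb_ord k (g : 'I_k -> V) (c : 'I_k -> R) :
  comb [seq g i | i <- enum 'I_k] (\sum_(i < k) c i *: g i).
Proof.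
apply: submod_sum; first exact: comb_submod.
move=> i _; case: (comb_submod [seq g i | i <- enum 'I_k]) => _ _ Z; apply: Z.
by apply: comb_mem; apply: map_f; rewrite mem_enum.
Qed.

Lemma noeth_fg : noetherian_ring R -> fg_module V -> noeth.
Proof.
move=> HR [k [g Hg]].
suff H : forall s (N : V -> Prop), is_submod N -> (forall x, N x -> comb s x) -> fgsub N.
  move=> N HN; apply: (H [seq g i | i <- enum 'I_k]) => // x _.
  by have [c ->] := Hg x; apply: comb_ord.
elim=> [|h t IH] N HN Hs.
  exists [::]; split => // x Hx; exact: Hs.
pose I := fun c : R => exists y, comb t y /\ N (c *: h + y).
have HI : is_ideal I.
  case: HN => N0 ND NZ; split.
  - exists 0; split; first by case: (comb_submod t).
    by rewrite scale0r addr0.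
  - move=> x y [y1 [H1 H1']] [y2 [H2 H2']]; exists (y1 + y2); split.
      by case: (comb_submod t) => _ D _; apply: D.
    by rewrite scalerDl addrACA; apply: ND.
  - move=> r x [y [H1 H1']]; exists (r *: y); split.
      by case: (comb_submod t) => _ _ Z; apply: Z.
    by rewrite -scalerA -scalerDr; apply: NZ.
have [m [cs Hcs]] := HR I HI.
have Hw : forall i, exists y, comb t y /\ N (cs i *: h + y).
  move=> i; apply/(Hcs (cs i)); exists (fun j => (j == i)%:R).
  rewrite (bigD1 i) //= eqxx mul1r big1 ?addr0 // => j /negbTE ->; by rewrite mul0r.
pose y i := proj1_sig (constructive_indefinite_description _ (Hw i)).
have Hy i : comb t (y i) /\ N (cs i *: h + y i).
  exact: proj2_sig (constructive_indefinite_description _ (Hw i)).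
pose N' := fun x => N x /\ comb t x.
have HN' : is_submod N'.
  case: HN => N0 ND NZ; case: (comb_submod t) => C0 CD CZ.
  split; [by []| move=> x z [? ?] [? ?]; split; auto | move=> r x [? ?]; split; auto].
have [s' [Hs'1 Hs'2]] := IH N' HN' (fun x H => proj2 H).
pose w := [seq cs i *: h + y i | i <- enum 'I_m].
exists (s' ++ w); split.
  move=> x; rewrite mem_cat => /orP [/Hs'1 []//|/mapP [i _ ->]]; exact: (proj2 (Hy i)).
move=> x Hx.
have [c [z [Hz Ex]]] := Hs x Hx.
have Ic : I c by exists z; rewrite -Ex.
have [d Ed] := (proj1 (Hcs c)) Ic.
have Hcat : forall u v, comb s' u -> comb w v -> comb (s' ++ w) (u + v).
  move=> u v Hu Hv; case: (comb_submod (s' ++ w)) => _ D _; apply: D.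
    by apply: (comb_min (comb_submod _) _ Hu) => q Hq; apply: comb_mem; rewrite mem_cat Hq.
  by apply: (comb_min (comb_submod _) _ Hv) => q Hq; apply: comb_mem; rewrite mem_cat Hq orbT.
have Hsum : \sum_(i < m) d i *: (cs i *: h + y i) = c *: h + \sum_(i < m) d i *: y i.
  rewrite Ed scaler_suml -big_split /=; apply: eq_bigr => i _.
  by rewrite scalerDr scalerA.
have -> : x = (z - \sum_(i < m) d i *: y i) + \sum_(i < m) d i *: (cs i *: h + y i).
  by rewrite Hsum Ex addrCA subrK.
apply: Hcat; last exact: comb_ord.
apply: Hs'2; split.
  have -> : z - \sum_(i < m) d i *: y i = x - \sum_(i < m) d i *: (cs i *: h + y i).
    by rewrite Hsum Ex opprD addrACA subrr add0r.
  apply: submod_sub => //; apply: submod_sum => // i _.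
  by case: HN => _ _ Z; apply: Z; exact: (proj2 (Hy i)).
apply: submod_sub; first exact: comb_submod.
  by [].
apply: submod_sum; first exact: comb_submod.
move=> i _; case: (comb_submod t) => _ _ Z; apply: Z; exact: (proj1 (Hy i)).
Qed.

End Gen.

Lemma noeth_R (R : comPzRingType) : noetherian_ring R -> @noeth _ R^o.
Proof.
move=> HR N HN.
have HI : is_ideal (N : R -> Prop) by case: HN.
have [k [g Hg]] := HR _ HI.
exists [seq (g i : R^o) | i <- enum 'I_k]; split.
  move=> x /mapP [i _ ->]; apply/Hg; exists (fun j => (j == i)%:R).
  rewrite (bigD1 i) //= eqxx mul1r big1 ?addr0 // => j /negbTE ->; by rewrite mul0r.
move=> x /Hg [c ->]; exact: (comb_ord (V:=R^o) g c).
Qed.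
Section Mod.
Variable R : comPzRingType.
Variable M : lmodType R.
Implicit Types (a b : R -> Prop) (N P Q : M -> Prop).

Lemma idmul_ind a N (Q : M -> Prop) : Q 0 -> (forall x y, Q x -> Q y -> Q (x + y)) ->
  (forall r y, a r -> N y -> Q (r *: y)) -> forall x, idmul a N x -> Q x.
Proof.
move=> Q0 QD QZ x [k [r [y [H ->]]]]; apply: big_ind => // i _.
by case: (H i) => ??; apply: QZ.
Qed.

Lemma idmul0 a N : idmul a N 0.
Proof. by exists 0%N, (fun _ => 0), (fun _ => 0); split; [case|rewrite big_ord0]. Qed.

Lemma idmul1 a N r y : a r -> N y -> idmul a N (r *: y).
Proof. by move=> ??; exists 1%N, (fun _ => r), (fun _ => y); split => //; rewrite big_ord1. Qed.

Lemma idmulD a N x y : idmul a N x -> idmul a N y -> idmul a N (x + y).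
Proof.
move=> [k [r [u [H ->]]]] [l [s [v [H' ->]]]].
exists (k + l)%N, (fun i => match split i with inl j => r j | inr j => s j end),
  (fun i => match split i with inl j => u j | inr j => v j end); split.
  by move=> i; case: (split i).
rewrite big_split_ord /=; congr (_ + _); apply: eq_bigr => i _.
  by rewrite (unsplitK (inl i)).
by rewrite (unsplitK (inr i)).
Qed.

Lemma idmulZ a N c x : is_ideal a -> idmul a N x -> idmul a N (c *: x).
Proof.
move=> [_ _ aM]; move: x; apply: idmul_ind.
- by rewrite scaler0; apply: idmul0.
- by move=> x y Hx Hy; rewrite scalerDr; apply: idmulD.
- by move=> r y Hr Hy; rewrite scalerA; apply: idmul1 => //; apply: aM.
Qed.

Lemma idmul_submod a N : is_ideal a -> is_submod (idmul a N).
Proof. move=> Ha; split; [exact: idmul0|exact: idmulD|move=> ??; exact: idmulZ]. Qed.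

Lemma idmul_mono a b N P : (forall r, a r -> b r) -> (forall x, N x -> P x) ->
  forall x, idmul a N x -> idmul b P x.
Proof.
move=> Hab HNP; apply: idmul_ind; [exact: idmul0|move=> ????; exact: idmulD|].
by move=> r y ??; apply: idmul1; auto.
Qed.

Lemma idmul_sub a N : is_submod N -> forall x, idmul a N x -> N x.
Proof. by move=> [N0 ND NZ]; apply: idmul_ind => // r y _; apply: NZ. Qed.

Lemma apow_submod a N n : is_ideal a -> is_submod N -> is_submod (apow a N n).
Proof. by move=> Ha HN; case: n => [|n] //=; apply: idmul_submod. Qed.

Lemma apow_sub a N n : is_ideal a -> is_submod N -> forall x, apow a N n x -> N x.
Proof.
move=> Ha HN; elim: n => [|n IH] x //= Hx; apply: IH.
apply: (idmul_sub (apow_submod n Ha HN)); exact: Hx.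
Qed.

Lemma apow_mono a b N P n : (forall r, a r -> b r) -> (forall x, N x -> P x) ->
  forall x, apow a N n x -> apow b P n x.
Proof.
move=> Hab HNP; elim: n => [|n IH] //= x; exact: idmul_mono.
Qed.

Definition psum N P := fun x => exists u v, N u /\ P v /\ x = u + v.

Lemma psum_submod N P : is_submod N -> is_submod P -> is_submod (psum N P).
Proof.
move=> [N0 ND NZ] [P0 PD PZ]; split.
- by exists 0, 0; rewrite addr0.
- move=> x y [u [v [? [? ->]]]] [u' [v' [? [? ->]]]]; exists (u + u'), (v + v').
  by rewrite addrACA; split; auto.
- move=> r x [u [v [? [? ->]]]]; exists (r *: u), (r *: v); rewrite scalerDr; split; auto.
Qed.

End Mod.

Definition jJ (R : comPzRingType) (r : R) : R^o -> Prop :=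
  fun x => exists c : R, x = c * (1 - r).
Definition jP (R : comPzRingType) (r : R) : (R^o -> Prop) -> Prop :=
  fun I => is_submod I /\ (forall x, jJ r x -> I x) /\ ~ I 1.

Lemma jac_unit (R : comPzRingType) : noetherian_ring R ->
  forall r : R, jacobson r -> exists u, u * (1 - r) = 1.
Proof.
move=> HR r Hr; apply: NNPP => Hno.
have HJ : jP r (jJ r).
  split; last split => //.
  - split.
    + by exists 0; rewrite mul0r.
    + by move=> x y [c ->] [d ->]; exists (c + d); rewrite mulrDl.
    + by move=> c x [d ->]; exists (c * d); exact: mulrA.
  - by move=> [c Hc]; apply: Hno; exists c.
have [m [[Hm1 [Hm2 Hm3]] Hmax]] := @noeth_max _ _ (noeth_R HR) (jP r) (fun N H => proj1 H) _ HJ.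
have Hmi : maximal_ideal m.
  rewrite /maximal_ideal; split; [by case: Hm1 | exact: Hm3 | ].
  move=> J' HJ' Hsub; case: (classic (J' 1)) => H1; [by left|right].
  apply: (Hmax J'); last exact: Hsub.
  split; first by case: HJ'.
  by split => // x Hx; apply: Hsub; apply: Hm2.
have Hmr := Hr m Hmi.
have Hm1r : m (1 - r) by apply: Hm2; exists 1; rewrite mul1r.
apply: Hm3; have -> : (1 : R^o) = r + (1 - r) by rewrite addrC subrK.
by case: Hm1 => _ D _; apply: D.
Qed.

Section Nak.
Variable R : comPzRingType.
Variable M : lmodType R.
Variable a : R -> Prop.
Hypothesis HR : noetherian_ring R.
Hypothesis Ha : is_ideal a.
Hypothesis Haj : forall x, a x -> jacobson x.

Lemma nakayama (s : seq M) : (forall x, comb s x -> idmul a (comb s) x) ->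
  forall x, comb s x -> x = 0.
Proof.
elim: s => [|g t IH] Hs x /=; first by [].
have Hg : comb (g :: t) g.
  by exists 1, 0; split; [case: (comb_submod t)|rewrite scale1r addr0].
have := Hs g Hg.
pose Q := fun x => exists rho z, a rho /\ idmul a (comb t) z /\ x = rho *: g + z.
have HQ : forall x, idmul a (comb (g :: t)) x -> Q x.
  case: (Ha) => a0 aD aM.
  apply: idmul_ind.
  - by exists 0, 0; split; [|split; [exact: idmul0|rewrite scale0r addr0]].
  - move=> u v [r1 [z1 [? [? ->]]]] [r2 [z2 [? [? ->]]]].
    exists (r1 + r2), (z1 + z2); split; first exact: aD.
    by split; [exact: idmulD|rewrite scalerDl addrACA].
  - move=> r y Hr [c [w [Hw ->]]]; exists (r * c), (r *: w); split.
      by rewrite mulrC; apply: aM.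
    by split; [exact: idmul1|rewrite scalerDr scalerA].
move=> /HQ [rho [z [Hrho [Hz Eg]]]].
have [u Hu] := jac_unit HR (Haj Hrho).
have Eg' : g = u *: z.
  have E1 : (1 - rho) *: g = z.
    by rewrite scalerBl scale1r {1}Eg addrAC subrr add0r.
  by rewrite -E1 scalerA Hu scale1r.
have Hgt : comb t g.
  by rewrite Eg'; case: (comb_submod t) => _ _ Z; apply: Z; exact: (idmul_sub (comb_submod t) Hz).
have Heq : forall y, comb (g :: t) y -> comb t y.
  move=> y [c [w [Hw ->]]]; case: (comb_submod t) => _ D Z; apply: D => //; exact: Z.
have Hto : forall y, comb t y -> comb (g :: t) y.
  by move=> y Hy; exists 0, y; rewrite scale0r add0r.
move=> Hx; apply: (IH _ x (Heq _ Hx)) => y Hy.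
apply: (idmul_mono (a := a) (fun _ H => H) Heq); apply: Hs; exact: Hto.
Qed.
End Nak.

Section Krull.
Variable R : comPzRingType.
Variable M : lmodType R.

Definition TT : M -> Prop := fun _ => True.

Lemma TT_submod : is_submod TT. Proof. by []. Qed.

Definition Bn (b : R) (n : nat) : M -> Prop := fun u => exists z, u = b ^+ n *: z.

Lemma Bn_submod b n : is_submod (Bn b n).
Proof.
split.
- by exists 0; rewrite scaler0.
- by move=> x y [z ->] [w ->]; exists (z + w); rewrite scalerDr.
- by move=> r x [z ->]; exists (r *: z); rewrite !scalerA mulrC.
Qed.

Lemma claim (b : R) (c : R -> Prop) : is_ideal c ->
  forall t n m, (n + m)%N = t -> forall x,
  apow (fun x => exists r y, c y /\ x = r * b + y) TT t x ->
  psum (Bn b n) (apow c TT m) x.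
Proof.
move=> Hc; elim=> [|t IH] n m Ht x.
  move: Ht => /eqP; rewrite addn_eq0 => /andP [/eqP -> /eqP ->] _.
  by exists x, 0; rewrite addr0; split => //; exists x; rewrite expr0 scale1r.
have HQ := psum_submod (Bn_submod b n) (apow_submod m Hc TT_submod).
case: (HQ) => Q0 QD QZ.
move=> /=; apply: idmul_ind => //.
move=> r y [s [w [Hw ->]]] Hy; rewrite scalerDl; apply: (QD).
  rewrite -scalerA; apply: (QZ).
  move: Ht; clear HQ Q0 QD QZ; case: n => [|n] Ht.
    exists (b *: y), 0; split; first by exists (b *: y); rewrite expr0 scale1r.
    by split; [case: (apow_submod m Hc TT_submod)|rewrite addr0].
  have [u [v [[z ->] [Hv ->]]]] := IH n m (eq_add_S _ _ Ht) y Hy.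
  exists (b ^+ n.+1 *: z), (b *: v); split; first by exists z.
  split; first by case: (apow_submod m Hc TT_submod) => _ _ Z; apply: Z.
  by rewrite scalerDr scalerA exprS.
case: m Ht HQ Q0 QD QZ => [|m] Ht HQ Q0 QD QZ.
  by exists 0, (w *: y); split; [case: (Bn_submod b n)|rewrite add0r].
rewrite addnS in Ht.
have [u [v [Hu [Hv ->]]]] := IH n m (eq_add_S _ _ Ht) y Hy.
rewrite scalerDr; exists (w *: u), (w *: v); split.
  by case: (Bn_submod b n) => _ _ Z; apply: Z.
by split => //=; apply: idmul1.
Qed.

Lemma ideal_of_submod (I : R^o -> Prop) : is_submod I -> is_ideal (I : R -> Prop).
Proof. by case. Qed.

Lemma PH (bs : seq R^o) N0 (L : M -> Prop) : is_submod L ->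
  (forall b, b \in bs -> forall z, L (b ^+ N0 *: z)) ->
  forall x, apow (comb bs : R -> Prop) TT (size bs * N0 + 1) x -> L x.
Proof.
move=> HL; case: (HL) => L0 LD LZ.
elim: bs => [|b bs IH] Hb x.
  rewrite mul0n add0n /=; apply: idmul_ind => // r y -> _.
  by rewrite scale0r.
have Hc : is_ideal (comb bs : R -> Prop) by apply: ideal_of_submod; exact: comb_submod.
have E : (size (b :: bs) * N0 + 1 = N0 + (size bs * N0 + 1))%N.
  by rewrite /= mulSn addnA.
rewrite E => Hx.
have Hx' := apow_mono (b := fun x => exists r y, (comb bs : R -> Prop) y /\ x = r * b + y)
   (fun r (H : comb (b :: bs) r) => match H with ex_intro c (ex_intro y (conj Hy E)) =>
        ex_intro _ c (ex_intro _ y (conj Hy E)) end) (fun x (H : TT x) => H) Hx.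
have [u [v [[z ->] [Hv ->]]]] := claim Hc (erefl _) Hx'.
apply: LD; first by apply: Hb; rewrite mem_head.
apply: IH => // b' Hb'; apply: Hb; by rewrite in_cons Hb' orbT.
Qed.
End Krull.

Section Krull2.
Variable R : comPzRingType.
Variable M : lmodType R.
Variable a : R -> Prop.
Hypothesis HR : noetherian_ring R.
Hypothesis Ha : is_ideal a.
Hypothesis Haj : forall x, a x -> jacobson x.
Hypothesis HM : fg_module M.

Definition KK : M -> Prop := fun x => forall n, apow a (@TT _ M) n x.

Lemma KK_submod : is_submod KK.
Proof.
split.
- by move=> n; case: (apow_submod n Ha (@TT_submod _ M)).
- by move=> x y Hx Hy n; case: (apow_submod n Ha (@TT_submod _ M)) => _ D _; apply: D.
- by move=> r x Hx n; case: (apow_submod n Ha (@TT_submod _ M)) => _ _ Z; apply: Z.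
Qed.

Definition PL (L : M -> Prop) := is_submod L /\ forall x, (L x /\ KK x) <-> idmul a KK x.

Lemma krull : forall x, KK x -> x = 0.
Proof.
have HN : noeth M := noeth_fg HR HM.
have aKK : forall x, idmul a KK x -> KK x := idmul_sub KK_submod.
have HP0 : PL (idmul a KK).
  split; first exact: idmul_submod.
  by move=> x; split; [case|move=> H; split => //; apply: aKK].
have [L [[HL1 HL2] Lmax]] := @noeth_max _ _ HN PL (fun _ H => proj1 H) _ HP0.
case: (HL1) => L0 LD LZ.
have aKL : forall x, idmul a KK x -> L x by move=> x /HL2 [].
have Hgen : forall b, a b -> exists n, forall z, L (b ^+ n *: z).
  move=> b Hb.
  pose Lj j := fun x => L (b ^+ j *: x).
  have HLj j : is_submod (Lj j).
    split; rewrite /Lj.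
    - by rewrite scaler0.
    - by move=> x y ??; rewrite scalerDr; apply: LD.
    - by move=> r x ?; rewrite scalerA mulrC -scalerA; apply: LZ.
  pose PP := fun N : M -> Prop => is_submod N /\ exists j, forall x, N x <-> Lj j x.
  have PP0 : PP (Lj 0%N) by split => //; exists 0%N.
  have [N [[HN1 [j Hj]] Nmax]] := @noeth_max _ _ HN PP (fun _ H => proj1 H) _ PP0.
  have Hst : forall x, Lj j.+1 x -> Lj j x.
    move=> x Hx; apply/Hj; apply: (Nmax (Lj j.+1)) => //.
      by split => //; exists j.+1.
    move=> y /Hj; rewrite /Lj exprS -scalerA; exact: LZ.
  pose L' := fun x => exists l z, L l /\ x = l + b ^+ j *: z.
  have HL' : PL L'.
    split.
      split.
      - by exists 0, 0; rewrite scaler0 addr0.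
      - move=> x y [l [z [Hl ->]]] [l' [z' [Hl' ->]]]; exists (l + l'), (z + z').
        by rewrite scalerDr addrACA; split => //; apply: LD.
      - move=> r x [l [z [Hl ->]]]; exists (r *: l), (r *: z).
        by rewrite scalerDr !scalerA mulrC; split => //; apply: LZ.
    move=> x; split.
      move=> [[l [z [Hl Ex]]] Kx]; apply/HL2; split => //.
      have H1 : L (b *: x) by apply: aKL; apply: idmul1.
      have H2 : Lj j.+1 z.
        rewrite /Lj exprS -scalerA.
        have -> : b *: (b ^+ j *: z) = b *: x - b *: l by rewrite Ex scalerDr addrAC subrr add0r.
        by apply: submod_sub => //; apply: LZ.
      by rewrite Ex; apply: LD => //; apply: Hst.
    move=> Hx; split; last exact: aKK.
    by exists x, 0; rewrite scaler0 addr0; split => //; apply: aKL.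
  exists j => z; apply: (Lmax L' HL').
    by move=> x Hx; exists x, 0; rewrite scaler0 addr0.
  by exists 0, z; rewrite add0r.
have [bs [Hbs1 Hbs2]] := noeth_R HR (Ha : @is_submod _ R^o a).
have Habs : forall r, a r -> (comb bs : R -> Prop) r := Hbs2.
have Hmono : forall n m (b : R^o), (n <= m)%N -> (forall z, L (b ^+ n *: z)) ->
    forall z, L (b ^+ m *: z).
  move=> n m b Hnm H z; have := LZ (b ^+ (m - n)) _ (H z).
  by rewrite scalerA -exprD subnK.
have [N0 HN0] := @seq_bound _ R^o (fun n b => forall z, L (b ^+ n *: z)) bs Hmono
  (fun b Hb => Hgen b (Hbs1 b Hb)).
have KaK : forall x, KK x -> idmul a KK x.
  move=> x Kx; apply/HL2; split => //.
  apply: (PH HL1 HN0).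
  exact: (@apow_mono _ _ a (comb bs) (@TT _ M) (@TT _ M) _ Habs (fun _ H => H) x (Kx _)).
have [s [Hs1 Hs2]] := HN KK KK_submod.
have HsK : forall x, comb s x -> KK x := comb_min KK_submod Hs1.
move=> x Kx; apply: (nakayama HR Ha Haj (s := s)) ; last exact: Hs2.
move=> y Hy; apply: (idmul_mono (a := a) (fun _ H => H) Hs2); apply: KaK; exact: HsK.
Qed.
End Krull2.

Section Main.
Variable R : comPzRingType.
Variable M : lmodType R.
Variable a : R -> Prop.
Hypothesis HR : noetherian_ring R.
Hypothesis Ha : is_ideal a.
Hypothesis Haj : forall x, a x -> jacobson x.
Hypothesis HM : fg_module M.
Implicit Types N P : M -> Prop.

Lemma apow_psum N1 N2 n : is_submod N1 -> is_submod N2 ->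
  forall x, apow a (psum N1 N2) n x -> psum (apow a N1 n) (apow a N2 n) x.
Proof.
move=> H1 H2; elim: n => [|n IH] //= x.
have HQ := psum_submod (apow_submod n.+1 Ha H1) (apow_submod n.+1 Ha H2).
case: HQ => Q0 QD QZ.
apply: idmul_ind => // r y Hr /IH [u [v [Hu [Hv ->]]]].
by exists (r *: u), (r *: v); rewrite scalerDr; split; [|split]; try apply: idmul1.
Qed.

Lemma psum_apow N1 N2 n : is_submod N1 -> is_submod N2 ->
  forall x, psum (apow a N1 n) (apow a N2 n) x -> apow a (psum N1 N2) n x.
Proof.
move=> H1 H2 x [u [v [Hu [Hv ->]]]].
case: (apow_submod n Ha (psum_submod H1 H2)) => _ D _; apply: D.
  by apply: (apow_mono (fun _ H => H) _ Hu) => y Hy; exists y, 0; split; [|split; [case: H2|rewrite addr0]].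
by apply: (apow_mono (fun _ H => H) _ Hv) => y Hy; exists 0, y; split; [case: H1|split; [|rewrite add0r]].
Qed.

Lemma sum_complete N1 N2 : is_submod N1 -> is_submod N2 ->
  adically_complete a N1 -> adically_complete a N2 -> adically_complete a (psum N1 N2).
Proof.
move=> H1 H2 [_ C1] [_ C2]; split.
  move=> x _ Hx; apply: (krull HR Ha Haj HM) => n.
  exact: (apow_mono (fun _ H => H) (fun _ _ => I) (Hx n)).
move=> x Hx Hc.
have Hd : forall n, exists p : M * M,
    apow a N1 n p.1 /\ apow a N2 n p.2 /\ x n.+1 - x n = p.1 + p.2.
  move=> n; have [u [v [Hu [Hv E]]]] := apow_psum H1 H2 (Hc n).
  by exists (u, v).
pose f n := proj1_sig (constructive_indefinite_description _ (Hd n)).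
have Hf n : apow a N1 n (f n).1 /\ apow a N2 n (f n).2 /\ x n.+1 - x n = (f n).1 + (f n).2.
  exact: proj2_sig (constructive_indefinite_description _ (Hd n)).
pose U n := \sum_(0 <= i < n) (f i).1.
pose V n := \sum_(0 <= i < n) (f i).2.
have HU n : N1 (U n).
  apply: submod_sum => // i _; exact: (apow_sub Ha H1 (proj1 (Hf i))).
have HV n : N2 (V n).
  apply: submod_sum => // i _; exact: (apow_sub Ha H2 (proj1 (proj2 (Hf i)))).
have [y1 [Hy1 Ey1]] : exists y, N1 y /\ forall n, apow a N1 n (y - U n).
  apply: C1 => // n; rewrite /U big_nat_recr //= addrAC subrr add0r.
  exact: (proj1 (Hf n)).
have [y2 [Hy2 Ey2]] : exists y, N2 y /\ forall n, apow a N2 n (y - V n).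
  apply: C2 => // n; rewrite /V big_nat_recr //= addrAC subrr add0r.
  exact: (proj1 (proj2 (Hf n))).
have [p [q [Hp [Hq E0]]]] := Hx 0%N.
have Ex : forall n, x n = p + q + (U n + V n).
  elim=> [|n IH]; first by rewrite /U /V !big_geq // !addr0.
  rewrite /U /V !big_nat_recr //= -/(U n) -/(V n).
  have := proj2 (proj2 (Hf n)); move/(congr1 (fun w => w + x n)); rewrite subrK => ->.
  by rewrite IH (addrACA (U n)) [LHS]addrC -[LHS]addrA.
exists ((p + y1) + (q + y2)); split.
  case: (H1) => _ D1 _; case: (H2) => _ D2 _.
  by exists (p + y1), (q + y2); split; [apply: D1|split; [apply: D2|]].
move=> n; apply: psum_apow => //; exists (y1 - U n), (y2 - V n); split => //; split => //.
by rewrite Ex (addrACA p y1 q y2) opprD (addrACA (p + q) (y1 + y2)) subrr add0r opprD (addrACA y1 y2).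
Qed.

Definition Z0 : M -> Prop := fun x => x = 0.

Lemma Z0_submod : is_submod Z0.
Proof.
split; rewrite /Z0 => //; [by move=> x y -> ->; rewrite addr0|by move=> r x ->; rewrite scaler0].
Qed.

Lemma Z0_complete : adically_complete a Z0.
Proof.
split; first by [].
move=> x Hx _; exists 0; split => // n; rewrite (Hx n) subrr.
by case: (apow_submod n Ha Z0_submod).
Qed.

Lemma main_thm : exists N : M -> Prop,
    maximal_complete a N /\
    forall N' : M -> Prop, maximal_complete a N' -> forall x, N' x <-> N x.
Proof.
have HN : noeth M := noeth_fg HR HM.
pose P := fun N : M -> Prop => is_submod N /\ adically_complete a N.
have HP0 : P Z0 by split; [exact: Z0_submod|exact: Z0_complete].
have [N [[HN1 HN2] Nmax]] := @noeth_max _ _ HN P (fun _ H => proj1 H) _ HP0.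
have HNmc : maximal_complete a N.
  by split => // N' H1 H2; apply: Nmax.
exists N; split => // N' [H1 H2 H3] x.
have Hs : P (psum N N') by split; [exact: psum_submod|exact: sum_complete].
have HsN : forall y, psum N N' y -> N y.
  apply: Nmax => // y Hy; exists y, 0; split => //; split; [by case: H1|by rewrite addr0].
have HsN' : forall y, psum N N' y -> N' y.
  apply: H3; [exact: psum_submod|exact: sum_complete|].
  by move=> y Hy; exists 0, y; split; [case: HN1|split; [|rewrite add0r]].
split => Hx.
  by apply: HsN; exists 0, x; split; [case: HN1|split; [|rewrite add0r]].
by apply: HsN'; exists x, 0; split => //; split; [case: H1|rewrite addr0].
Qed.
End Main.

Theorem lemma1p1 (R : comPzRingType) (M : lmodType R) (a : R -> Prop) :
  noetherian_ring R -> is_ideal a -> (forall x, a x -> jacobson x) ->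
  fg_module M ->
  exists N : M -> Prop,
    maximal_complete a N /\
    forall N' : M -> Prop, maximal_complete a N' -> forall x, N' x <-> N x.
Proof. move=> HR Ha Haj HM; exact: main_thm. Qed.
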